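(* Assume $p>2q$. For every integer $n\in\mathbb{N}$ there exists an integer $m$ such that $m$ is reachable from $n$ in $\mathcal{T}_{p/q}$ but not reachable from $n$ in $\widehat{\mathcal{T}_{p/q}}$.
   Context: Let $p>q>1$ be coprime integers, $A_p=\{0,\dots,p-1\}$ and $B=\{p-(2q-1),\dots,p-1\}$. For $n\in\mathbb{N}$ and $a\in\mathbb{Z}$, let $\tau(n,a)=\frac{np+a}{q}$, defined only when $q$ divides $np+a$. Let $\mathcal{T}_{p/q}$ (resp. $\widehat{\mathcal{T}_{p/q}}$) be the deterministic automaton with state set $\mathbb{N}$, alphabet $A_p$ (resp. $B$), and transitions $n\xrightarrow{a}\tau(n,a)$ for $a$ in the alphabet with $\tau(n,a)$ defined. A state $m$ is reachable from $n$ if there is a path (of transitions) from $n$ to $m$. *)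

(* Defs.v *)
From mathcomp Require Import all_boot.
From Stdlib Require Import Relations.

Set Implicit Arguments. Unset Strict Implicit. Unset Printing Implicit Defensive.

Definition alphA (p : nat) (a : nat) : bool := a < p.

(* Alphabet B = {p - (2q-1), ..., p-1}; used only when p > 2q, so all
   letters are natural numbers. *)
Definition alphB (p q : nat) (a : nat) : bool := (p - (2 * q - 1) <= a) && (a < p).

Definition trans (p q : nat) (alph : nat -> bool) (n m : nat) : Prop :=
  exists a, [/\ alph a, q %| n * p + a & m = (n * p + a) %/ q].

Definition reachable (p q : nat) (alph : nat -> bool) (n m : nat) : Prop :=
  clos_refl_trans nat (trans p q alph) n m.

Definition reachT (p q : nat) := reachable p q (alphA p).
Definition reachThat (p q : nat) := reachable p q (alphB p q).

(* Main.v *)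
Require Import Defs.
From mathcomp Require Import all_boot.
From Stdlib Require Import Relations Lia.
From mathcomp Require Import zify.

Lemma interval_lem (p q n : nat) (hq : 1 < q) (hp2q : 2 * q < p) :
  forall k, exists L, n <= L /\ forall j, j <= k -> reachT p q n (L + j).
Proof.
elim=> [|k [L [HnL HL]]].
  exists n; split => // j; rewrite leqn0 => /eqP ->; rewrite addn0; apply: rt_refl.
set L' := (L * p + q - 1) %/ q.
have hL1 : L * p <= q * L'.
  have := leq_trunc_div (L * p + q - 1) q.
  have := ltn_ceil (L * p + q - 1) (ltnW hq).
  rewrite /L'; nia.
have hL2 : q * L' <= L * p + q - 1 by rewrite /L' mulnC leq_trunc_div.
exists L'; split; first nia.
move=> j hj.
set m := L' + j.
set y := (q * m) %/ p.
have hp0 : 0 < p by lia.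
have hym : y * p + (q * m) %% p = q * m by rewrite /y -divn_eq.
have hy1 : L <= y.
  rewrite /y leq_divRL //; nia.
have hy2 : y <= L + k.
  have : y < L + k.+1; last lia.
  rewrite /y ltn_divLR //; nia.
apply: rt_trans (HL (y - L) ltac:(lia)) _.
have -> : L + (y - L) = y by lia.
apply: rt_step.
exists ((q * m) %% p); split.
- by rewrite /alphA ltn_mod.
- by rewrite hym dvdn_mulr.
- by rewrite hym mulKn //; lia.
Qed.

Theorem mainTheorem13 (p q : nat) (hq : 1 < q) (hqp : q < p) (hcop : coprime p q)
  (hp2q : 2 * q < p) :
  forall n : nat, exists m : nat, reachT p q n m /\ ~ reachThat p q n m.
Proof.
move=> n.
have [L [HnL HL]] := @interval_lem p q n hq hp2q q.
set c := (L %/ q).+1.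
have hlo' : L < c * q.
  have := divn_eq L q; have := ltn_pmod L (ltnW hq); rewrite /c; nia.
have hhi : c * q <= L + q.
  have := divn_eq L q; rewrite /c; nia.
exists (c * p); split.
  apply: rt_trans (HL (c * q - L) ltac:(lia)) _.
  have -> : L + (c * q - L) = c * q by lia.
  apply: rt_step; exists 0; split.
  - rewrite /alphA; lia.
  - by rewrite addn0 -mulnA dvdn_mull // dvdn_mulr.
  - rewrite addn0 mulnAC mulnK //; lia.
rewrite /reachThat /reachable => H0; have H := clos_rt_rtn1 _ _ _ _ H0.
inversion H as [Heq|z m' Htr _ Heq].
  nia.
move: Htr => [a [/andP [ha1 ha2] hd hm]].
have : q * (c * p) = z * p + a by rewrite hm mulnC divnK.
move=> E.
case: (leqP (q * c) z) => hz.
  have : q * c * p <= z * p by rewrite leq_mul2r hz orbT.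
  rewrite /alphB in ha1; lia.
have : z * p + p <= q * c * p by have := leq_mul2r p z.+1 (q * c); rewrite hz orbT mulSn; lia.
lia.
Qed.
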